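(* Let $\mathbb{X}$ be a Euclidean space, $f:\mathbb{X}\to\mathbb{R}$ and $G:\mathbb{X}\to\mathbb{S}^n$ twice continuously differentiable, and consider $\min_x f(x)+\delta_{\mathbb{S}^n_+}(G(x))$. Let $\bar x$ be a stationary point and $\overline{Y}\in\mathcal{M}(\bar x)$. Let $A=G(\bar x)+\overline{Y}$ have eigenvalue decomposition $A=P\Lambda(A)P^T$ with $P=[P_\alpha\ P_\beta\ P_\gamma]$ orthogonal, where $\alpha,\beta,\gamma$ are the index sets of positive, zero and negative eigenvalues of $A$. Then there exists $q\in{\rm quad}\,\delta_{\mathbb{S}^n_+}(G(\bar x)\mid\overline{Y})$ such that for all $H\in\mathbb{S}^n$, $$q(H)=-\tfrac12\varUpsilon_{G(\bar x)}(\overline{Y},H)+\delta_{{\rm aff}\,\mathcal{C}_{\mathbb{S}^n_+}(G(\bar x),\overline{Y})}(H)=\sum_{i\in\alpha,\,j\in\gamma}\frac{-\lambda_j(A)}{\lambda_i(A)}(\widetilde H_{ij})^2+\delta_{{\rm aff}\,\mathcal{C}_{\mathbb{S}^n_+}(G(\bar x),\overline{Y})}(H),$$ where $\widetilde H=P^THP$.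
   Context: $\mathbb{S}^n$ is the space of real symmetric $n\times n$ matrices with the Frobenius inner product, $\mathbb{S}^n_+$ ($\mathbb{S}^n_-$) the cone of positive (negative) semidefinite matrices, $\delta_C$ the indicator function of a set $C$ (0 on $C$, $+\infty$ off $C$). $L(x,Y)=f(x)+\langle Y,G(x)\rangle$. $\mathcal{M}(\bar x)=\{Y\in\mathbb{S}^n\mid L_x'(\bar x,Y)=0,\ G(\bar x)\in\mathbb{S}^n_+,\ Y\in\mathbb{S}^n_-,\ \langle G(\bar x),Y\rangle=0\}$, and $\bar x$ is stationary if this set is nonempty. $\lambda_1(A)\ge\dots\ge\lambda_n(A)$ are the eigenvalues of $A$. The affine hull of the critical cone is ${\rm aff}\,\mathcal{C}_{\mathbb{S}^n_+}(G(\bar x),\overline{Y})=\{H\in\mathbb{S}^n\mid P_\beta^THP_\gamma=0,\ P_\gamma^THP_\gamma=0\}$. The $\sigma$-term is $\varUpsilon_{G(\bar x)}(\overline{Y},H)=2\langle\overline{Y},HG(\bar x)^{\dagger}H\rangle$, with $G(\bar x)^\dagger$ the Moore–Penrose pseudo-inverse. Second subderivative: for $g:\mathbb{Y}\to(-\infty,\infty]$ finite at $\bar z$ and $v\in\mathbb{Y}$, $\Delta_t^2g(\bar z\mid v)(u)=\frac{g(\bar z+tu)-g(\bar z)-t\langle v,u\rangle}{t^2/2}$ and $d^2g(\bar z\mid v)(w)=\liminf_{t\downarrow0,u\to w}\Delta_t^2g(\bar z\mid v)(u)$; $g$ is twice epi-differentiable at $\bar z$ for $v$ if $\Delta_t^2g(\bar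 z\mid v)$ epi-converges to $d^2g(\bar z\mid v)$ as $t\downarrow0$. A set-valued map $\mathcal{R}$ is generalized linear if its graph is a linear subspace. A function $q$ is a generalized quadratic form if $q(0)=0$ and $\partial q$ is generalized linear. $g$ is generalized twice differentiable at $z$ for $v$ if it is twice epi-differentiable there and $d^2g(z\mid v)$ is a generalized quadratic form. The quadratic bundle ${\rm quad}\,g(\bar z\mid\bar v)$ is the set of generalized quadratic forms $q$ for which there exist $(z^k,v^k)\to(\bar z,\bar v)$ with $g$ generalized twice differentiable at $z^k$ for $v^k$ and $\frac12 d^2g(z^k\mid v^k)$ epi-converging to $q$. *)

(* Defs.v *)
From HB Require Import structures.
From mathcomp Require Import all_boot all_order all_algebra.
From mathcomp Require Import all_classical all_reals all_analysis.
Set Implicit Arguments. Unset Strict Implicit. Unset Printing Implicit Defensive.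
Import Order.TTheory GRing.Theory Num.Theory.
Import numFieldNormedType.Exports.
Local Open Scope classical_set_scope.
Local Open Scope ring_scope.

(* Variational-analysis notions on a finite-dimensional real space V,       *)
(* taken relative to a linear subspace S of V (the "ambient" Euclidean      *)
(* space of the paper, here S^n inside 'M_n) with inner product ip.         *)
(* All points, directions, subgradients and approximating sequences are     *)
(* required to lie in S; the values of functions outside S play no role.    *)
Section VarAnalysis.
Context {R : realType} {V : normedModType R} (S : set V) (ip : V -> V -> R).

Definition sd_quot (g : V -> \bar R) (z v : V) (t : R) (u : V) : \bar R :=
  ((g (z + t *: u)%R - g z - (t * ip v u)%:E) * (2 / t ^+ 2)%:E)%E.

(* second subderivative  d^2 g(z | v)(w) = liminf_{t \downarrow 0, u -> w} Delta_t^2 g(z|v)(u)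
   = sup_{d > 0} inf { Delta_t^2 g(z|v)(u) | 0 < t < d, u in S, |u - w| < d } *)
Definition second_subderiv (g : V -> \bar R) (z v : V) (w : V) : \bar R :=
  ereal_sup [set ereal_inf [set y | exists t u, 0 < t < d /\ S u /\
                                      `|u - w| < d /\ y = sd_quot g z v t u]
            | d in [set d : R | 0 < d]].

Definition epi_conv (f_ : nat -> V -> \bar R) (f : V -> \bar R) : Prop :=
  forall w, S w ->
    (forall u_ : nat -> V, (forall k, S (u_ k)) -> u_ @ \oo --> w ->
        (f w <= limn_einf (fun k => f_ k (u_ k)))%E) /\
    (exists u_ : nat -> V, (forall k, S (u_ k)) /\ u_ @ \oo --> w /\
        (limn_esup (fun k => f_ k (u_ k)) <= f w)%E).

Definition twice_epi_diff (g : V -> \bar R) (z v : V) : Prop :=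
  g z \is a fin_num /\
  forall t_ : nat -> R, (forall k, 0 < t_ k) -> t_ @ \oo --> 0 ->
    epi_conv (fun k => sd_quot g z v (t_ k)) (second_subderiv g z v).

Definition reg_subgrad (g : V -> \bar R) (z v : V) : Prop :=
  S z /\ S v /\ g z \is a fin_num /\
  forall e : R, 0 < e -> exists d : R, 0 < d /\
    forall z', S z' -> `|z' - z| < d ->
      (g z + (ip v (z' - z)%R - e * `|z' - z|)%:E <= g z')%E.

Definition lim_subgrad (g : V -> \bar R) (z v : V) : Prop :=
  S z /\ S v /\ g z \is a fin_num /\
  exists z_ v_ : nat -> V,
    z_ @ \oo --> z /\ (fun k => g (z_ k)) @ \oo --> g z /\
    (forall k, reg_subgrad g (z_ k) (v_ k)) /\ v_ @ \oo --> v.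

Definition gen_linear (M : V -> V -> Prop) : Prop :=
  M 0 0 /\
  (forall z1 v1 z2 v2, M z1 v1 -> M z2 v2 -> M (z1 + z2) (v1 + v2)) /\
  (forall (a : R) z v, M z v -> M (a *: z) (a *: v)).

Definition gen_quad_form (q : V -> \bar R) : Prop :=
  q 0 = 0%E /\ gen_linear (lim_subgrad q).

Definition gen_twice_diff (g : V -> \bar R) (z v : V) : Prop :=
  twice_epi_diff g z v /\ gen_quad_form (second_subderiv g z v).

Definition quad_bundle (g : V -> \bar R) (zb vb : V) (q : V -> \bar R) : Prop :=
  gen_quad_form q /\
  exists z_ v_ : nat -> V,
    (forall k, S (z_ k) /\ S (v_ k)) /\
    z_ @ \oo --> zb /\ v_ @ \oo --> vb /\
    (forall k, gen_twice_diff g (z_ k) (v_ k)) /\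
    epi_conv (fun k w => ((2^-1)%:E * second_subderiv g (z_ k) (v_ k) w)%E) q.

End VarAnalysis.

Section Matrices.
Context {R : realType} (n : nat).

Definition symS : set 'M[R]_n := [set A | A^T = A].

Definition frob (A B : 'M[R]_n) : R := \tr (A^T *m B).

Definition psd (A : 'M[R]_n) : Prop :=
  A^T = A /\ forall x : 'cV[R]_n, 0 <= (x^T *m A *m x) 0 0.
Definition nsd (A : 'M[R]_n) : Prop := psd (- A).

Definition delta_psd (A : 'M[R]_n) : \bar R := if `[< psd A >] then 0%E else +oo%E.

Definition penrose (A X : 'M[R]_n) : Prop :=
  A *m X *m A = A /\ X *m A *m X = X /\ (A *m X)^T = A *m X /\ (X *m A)^T = X *m A.
Definition mp_pinv (A : 'M[R]_n) : 'M[R]_n := xget 0 [set X | penrose A X].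

Definition Upsilon (Z Y H : 'M[R]_n) : R := 2 * frob Y (H *m mp_pinv Z *m H).

End Matrices.

Section Smooth.
Context {R : realType} (m : nat).

Definition e_ (i : 'I_m) : 'rV[R]_m := delta_mx 0 i.

Definition C2 {W : normedModType R} (F : 'rV[R]_m -> W) : Prop :=
  continuous F /\
  (forall i x, derivable F x (e_ i)) /\
  (forall i, continuous ('D_(e_ i) F)) /\
  (forall i j x, derivable ('D_(e_ i) F) x (e_ j)) /\
  (forall i j, continuous ('D_(e_ j) ('D_(e_ i) F))).

Definition Lag {n} (f : 'rV[R]_m -> R) (G : 'rV[R]_m -> 'M[R]_n)
  (x : 'rV[R]_m) (Y : 'M[R]_n) : R := f x + frob Y (G x).

Definition multiplier {n} (f : 'rV[R]_m -> R) (G : 'rV[R]_m -> 'M[R]_n)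
  (xb : 'rV[R]_m) (Y : 'M[R]_n) : Prop :=
  (forall i, 'D_(e_ i) (fun x => Lag f G x Y) xb = 0) /\
  psd (G xb) /\ nsd Y /\ frob (G xb) Y = 0.

Definition stationary {n} (f : 'rV[R]_m -> R) (G : 'rV[R]_m -> 'M[R]_n)
  (xb : 'rV[R]_m) : Prop := exists Y, multiplier f G xb Y.

End Smooth.

(* affine hull of the critical cone:
   { H in S^n | P_beta^T H P_gamma = 0, P_gamma^T H P_gamma = 0 },
   beta = {i | lam i = 0}, gamma = {i | lam i < 0} *)
Definition aff_crit {R : realType} {n} (P : 'M[R]_n) (lam : 'I_n -> R)
  (H : 'M[R]_n) : Prop :=
  symS H /\
  (forall i j, lam i = 0 -> lam j < 0 -> (P^T *m H *m P) i j = 0) /\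
  (forall i j, lam i < 0 -> lam j < 0 -> (P^T *m H *m P) i j = 0).

Definition delta_set {R : realType} {T} (C : T -> Prop) (x : T) : \bar R :=
  if `[< C x >] then 0%E else +oo%E.

(* Main.v *)
Require Import Defs.
From HB Require Import structures.
From mathcomp Require Import all_boot all_order all_algebra.
From mathcomp Require Import all_classical all_reals all_analysis.
From mathcomp Require Import ring lra.
Import Order.TTheory GRing.Theory Num.Theory.
Import numFieldNormedType.Exports.
Local Open Scope classical_set_scope.
Local Open Scope ring_scope.


Section Basics.
Context {R : realType} {n : nat}.
Implicit Types (A B M : 'M[R]_n).

Definition qf M (x : 'I_n -> R) : R := \sum_p \sum_q x p * M p q * x q.
Definition bf M (x y : 'I_n -> R) : R := \sum_p \sum_q x p * M p q * y q.

Lemma qfE M x : qf M x = bf M x x. Proof. by []. Qed.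

Lemma bfDl M x y z : bf M (fun p => x p + y p) z = bf M x z + bf M y z.
Proof.
rewrite /bf -big_split /=; apply: eq_bigr => p _.
rewrite -big_split /=; apply: eq_bigr => q _; ring.
Qed.

Lemma bfDr M x y z : bf M z (fun p => x p + y p) = bf M z x + bf M z y.
Proof.
rewrite /bf -big_split /=; apply: eq_bigr => p _.
rewrite -big_split /=; apply: eq_bigr => q _; ring.
Qed.

Lemma bfZl M a x y : bf M (fun p => a * x p) y = a * bf M x y.
Proof.
rewrite /bf mulr_sumr; apply: eq_bigr => p _.
rewrite mulr_sumr; apply: eq_bigr => q _; ring.
Qed.

Lemma bfZr M a x y : bf M x (fun p => a * y p) = a * bf M x y.
Proof.
rewrite /bf mulr_sumr; apply: eq_bigr => p _.
rewrite mulr_sumr; apply: eq_bigr => q _; ring.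
Qed.

Lemma bfC M x y : M^T = M -> bf M x y = bf M y x.
Proof.
move=> HM; rewrite /bf exchange_big /=; apply: eq_bigr => p _.
apply: eq_bigr => q _.
have -> : M q p = M p q by rewrite -{1}HM mxE.
ring.
Qed.

Lemma bfMD M1 M2 x y : bf (M1 + M2) x y = bf M1 x y + bf M2 x y.
Proof.
rewrite /bf -big_split /=; apply: eq_bigr => p _.
rewrite -big_split /=; apply: eq_bigr => q _; rewrite mxE; ring.
Qed.

Lemma bfMZ a M x y : bf (a *: M) x y = a * bf M x y.
Proof.
rewrite /bf mulr_sumr; apply: eq_bigr => p _.
rewrite mulr_sumr; apply: eq_bigr => q _; rewrite mxE; ring.
Qed.

Definition dg (mu : 'I_n -> R) : 'M[R]_n := diag_mx (\row_i mu i).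

Lemma dgE mu i j : dg mu i j = if i == j then mu i else 0.
Proof. by rewrite /dg !mxE; case: (i == j); rewrite ?mulr1n ?mulr0n. Qed.

Lemma bf_dg mu x y : bf (dg mu) x y = \sum_p mu p * x p * y p.
Proof.
rewrite /bf; apply: eq_bigr => p _.
rewrite (bigD1 p) //= big1 ?addr0; first by rewrite dgE eqxx; ring.
by move=> q /negbTE Hq; rewrite dgE eq_sym Hq; ring.
Qed.

Definition ev (j : 'I_n) : 'I_n -> R := fun p => if p == j then 1 else 0.

Lemma bf_evl M j y : bf M (ev j) y = \sum_q M j q * y q.
Proof.
rewrite /bf (bigD1 j) //= [X in _ + X]big1 ?addr0.
  by apply: eq_bigr => q _; rewrite /ev eqxx; ring.
by move=> p /negbTE Hp; apply: big1 => q _; rewrite /ev Hp; ring.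
Qed.
Lemma bf_evr M x j : bf M x (ev j) = \sum_p x p * M p j.
Proof.
rewrite /bf; apply: eq_bigr => p _.
rewrite (bigD1 j) //= big1 ?addr0; first by rewrite /ev eqxx; ring.
by move=> q /negbTE Hq; rewrite /ev Hq; ring.
Qed.

Lemma bf_ev M i j : bf M (ev i) (ev j) = M i j.
Proof.
rewrite bf_evl (bigD1 j) //= big1 ?addr0; first by rewrite /ev eqxx mulr1.
by move=> q /negbTE Hq; rewrite /ev Hq mulr0.
Qed.

Lemma quadE M (x : 'cV[R]_n) : (x^T *m M *m x) 0 0 = qf M (fun p => x p 0).
Proof.
rewrite /qf mxE.
under eq_bigr => q _ do rewrite mxE mulr_suml.
rewrite exchange_big /=; apply: eq_bigr => p _; apply: eq_bigr => q _.
by rewrite !mxE.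
Qed.

Lemma frobE A B : frob A B = \sum_i \sum_j A i j * B i j.
Proof.
rewrite /frob /mxtrace.
under eq_bigr => i _ do rewrite mxE.
rewrite exchange_big /=; apply: eq_bigr => i _; apply: eq_bigr => j _.
by rewrite mxE.
Qed.

Lemma frob_dg mu B : frob (dg mu) B = \sum_i mu i * B i i.
Proof.
rewrite frobE; apply: eq_bigr => i _.
rewrite (bigD1 i) //= big1 ?addr0; first by rewrite dgE eqxx.
by move=> j /negbTE Hj; rewrite dgE eq_sym Hj mul0r.
Qed.

Lemma frobC A B : frob A B = frob B A.
Proof. by rewrite /frob -mxtrace_tr trmx_mul trmxK. Qed.

Lemma frobDr A B C : frob A (B + C) = frob A B + frob A C.
Proof. by rewrite /frob mulmxDr mxtraceD. Qed.

Lemma frobZr a A B : frob A (a *: B) = a * frob A B.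
Proof. by rewrite /frob -scalemxAr mxtraceZ. Qed.

Lemma frobNr A B : frob A (- B) = - frob A B.
Proof. by rewrite -scaleN1r frobZr mulN1r. Qed.

End Basics.

Section Conj.
Context {R : realType} {n : nat} (P : 'M[R]_n) (HP : P^T *m P = 1%:M).

Lemma PPt : P *m P^T = 1%:M.
Proof. exact: mulmx1C. Qed.

Definition tl (W : 'M[R]_n) := P^T *m W *m P.
Definition utl (X : 'M[R]_n) := P *m X *m P^T.

Lemma tl_utl X : tl (utl X) = X.
Proof. by rewrite /tl /utl !mulmxA HP mul1mx -mulmxA HP mulmx1. Qed.

Lemma utl_tl W : utl (tl W) = W.
Proof. by rewrite /tl /utl !mulmxA PPt mul1mx -mulmxA PPt mulmx1. Qed.

Lemma tlD A B : tl (A + B) = tl A + tl B.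
Proof. by rewrite /tl mulmxDr mulmxDl. Qed.
Lemma tlZ a A : tl (a *: A) = a *: tl A.
Proof. by rewrite /tl -scalemxAr -scalemxAl. Qed.
Lemma tlN A : tl (- A) = - tl A.
Proof. by rewrite /tl mulmxN mulNmx. Qed.
Lemma tl0 : tl 0 = 0.
Proof. by rewrite /tl mulmx0 mul0mx. Qed.
Lemma utlD A B : utl (A + B) = utl A + utl B.
Proof. by rewrite /utl mulmxDr mulmxDl. Qed.
Lemma utlZ a A : utl (a *: A) = a *: utl A.
Proof. by rewrite /utl -scalemxAr -scalemxAl. Qed.

Lemma tl_sym W : W^T = W -> (tl W)^T = tl W.
Proof. by move=> HW; rewrite /tl !trmx_mul trmxK HW mulmxA. Qed.

Lemma utl_sym X : X^T = X -> (utl X)^T = utl X.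
Proof. by move=> HX; rewrite /utl !trmx_mul trmxK HX mulmxA. Qed.

Lemma sym_tl W : (tl W)^T = tl W -> W^T = W.
Proof. by move=> H; rewrite -(utl_tl W) utl_sym. Qed.

Lemma frob_tl A B : frob A B = frob (tl A) (tl B).
Proof.
rewrite /frob /tl !trmx_mul trmxK !mulmxA.
rewrite -[P^T *m A^T *m P *m P^T]mulmxA PPt mulmx1.
by rewrite [RHS]mxtrace_mulC !mulmxA PPt mul1mx.
Qed.

Lemma psd_utl X : psd (utl X) <-> (X^T = X /\ forall x, 0 <= qf X x).
Proof.
split.
- move=> [Hs Hq]; split.
    by rewrite -(tl_utl X) tl_sym.
  move=> x; pose y : 'cV[R]_n := P *m \col_p x p.
  have := Hq y; rewrite quadE.
  suff -> : qf (utl X) (fun p => y p 0) = qf X x by [].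
  rewrite -[X in qf X x]tl_utl.
  have H1 : forall (v : 'cV[R]_n) M, qf (tl M) (fun p => v p 0) = qf M (fun p => (P *m v) p 0).
    by move=> v M; rewrite -!quadE /tl trmx_mul !mulmxA.
  have := H1 (\col_p x p) (utl X).
  have -> : (fun p => (\col_p x p : 'cV[R]_n) p 0) = x.
    by apply: funext => p; rewrite mxE.
  by move=> ->.
- move=> [Hs Hq]; split; first exact: utl_sym.
  move=> x; rewrite /utl.
  have -> : x^T *m (P *m X *m P^T) *m x = (P^T *m x)^T *m X *m (P^T *m x).
    by rewrite trmx_mul trmxK !mulmxA.
  by rewrite quadE.
Qed.

Lemma psd_sym (A : 'M[R]_n) : psd A -> A^T = A. Proof. by case. Qed.

Lemma psd_tl W : psd W <-> ((tl W)^T = tl W /\ forall x, 0 <= qf (tl W) x).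
Proof. by rewrite -psd_utl utl_tl. Qed.

End Conj.


Section Ereal.
Context {R : realType}.
Local Open Scope ereal_scope.

Lemma lee_real (l x : \bar R) : (forall M : R, M%:E < l -> M%:E <= x) -> l <= x.
Proof.
move=> H; case: x H => [x||] H; last 2 first.
- by rewrite leey.
- case: l H => [l||] H //.
  + have h := H (l - 1)%R; rewrite lte_fin in h.
    by have := h ltac:(lra); rewrite leeNy_eq.
  + by have := H 0%R; rewrite ltry => /(_ erefl); rewrite leeNy_eq.
case: l H => [l||] H //; try by rewrite leNye.
- rewrite lee_fin leNgt; apply/negP => hlt.
  have h := H ((x + l) / 2)%R; rewrite !lte_fin !lee_fin in h.
  have : ((x + l) / 2 <= x)%R by apply: h; lra.
  lra.
- have := H (x + 1)%R; rewrite ltry lee_fin => /(_ erefl) h; exfalso; lra.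
Qed.

Lemma lee_real' (l x : \bar R) : (forall M : R, l < M%:E -> x <= M%:E) -> x <= l.
Proof.
move=> H; case: x H => [x||] H; last first.
- by rewrite leNye.
- case: l H => [l||] H //; try by rewrite leey.
  + have h := H (l + 1)%R; rewrite lte_fin in h.
    by have := h ltac:(lra); rewrite leye_eq.
  + by have := H 0%R; rewrite ltNyr => /(_ erefl); rewrite leye_eq.
case: l H => [l||] H //; try by rewrite leey.
- rewrite lee_fin leNgt; apply/negP => hlt.
  have h := H ((x + l) / 2)%R; rewrite !lte_fin !lee_fin in h.
  have : (x <= (x + l) / 2)%R by apply: h; lra.
  lra.
- have := H (x - 1)%R; rewrite ltNyr lee_fin => /(_ erefl) h; exfalso; lra.
Qed.

Lemma liminf_ge (u : nat -> \bar R) (l : \bar R) :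
  (forall M : R, M%:E < l -> \forall k \near \oo, M%:E <= u k) ->
  l <= limn_einf u.
Proof.
move=> H; apply: lee_real => M HM; rewrite limn_einf_lim.
apply: lime_ge; first exact: is_cvg_einfs.
have [N _ HN] := H M HM.
exists N => // k /= Nk; apply: le_ereal_inf_tmp => _ [j /= kj <-].
by apply: HN; rewrite /= (leq_trans Nk kj).
Qed.

Lemma limsup_le (u : nat -> \bar R) (l : \bar R) :
  (forall M : R, l < M%:E -> \forall k \near \oo, u k <= M%:E) ->
  limn_esup u <= l.
Proof.
move=> H; apply: lee_real' => M HM; rewrite limn_esup_lim.
apply: lime_le; first exact: is_cvg_esups.
have [N _ HN] := H M HM.
exists N => // k /= Nk; apply: ge_ereal_sup => _ [j /= kj <-].
by apply: HN; rewrite /= (leq_trans Nk kj).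
Qed.

End Ereal.

Section Cvg.
Context {R : realType} {n : nat}.

Lemma cvg_sumI {T} (F : set_system T) (FF : Filter F) (f : 'I_n -> T -> R) (a : 'I_n -> R) :
  (forall i, f i x @[x --> F] --> a i) ->
  (\sum_i f i x) @[x --> F] --> \sum_i a i.
Proof.
move=> H; apply: (@cvg_big R 'I_n +%R 0 xpredT add_continuous T F) => //.
Qed.

Lemma cvg_entry (u : nat -> 'M[R]_n) (W : 'M[R]_n) : u @ \oo --> W ->
  forall i j, (fun k => u k i j) @ \oo --> W i j.
Proof.
move=> H i j.
exact: (@continuous_cvg _ _ _ _ _ u (fun M : 'M[R]_n => M i j) W (@coord_continuous R n n i j W) H).
Qed.

Lemma tlE (P W : 'M[R]_n) i j : tl P W i j = \sum_p \sum_q P p i * W p q * P q j.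
Proof.
rewrite /tl mxE; under eq_bigr => q _ do rewrite mxE mulr_suml.
rewrite exchange_big /=; apply: eq_bigr => p _; apply: eq_bigr => q _.
by rewrite !mxE.
Qed.

Lemma cvg_tl (P : 'M[R]_n) (u : nat -> 'M[R]_n) (W : 'M[R]_n) : u @ \oo --> W ->
  forall i j, (fun k => tl P (u k) i j) @ \oo --> tl P W i j.
Proof.
move=> H i j; rewrite tlE; under eq_fun do rewrite tlE.
apply: cvg_sumI => p; apply: cvg_sumI => q.
apply: cvgM; last exact: cvg_cst.
apply: cvgM; first exact: cvg_cst.
exact: cvg_entry.
Qed.

End Cvg.


Lemma delta_setT {R : realType} {T} (C : T -> Prop) x : C x -> delta_set (R:=R) C x = 0%E.
Proof. by move=> h; rewrite /delta_set asboolT. Qed.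
Lemma delta_setF {R : realType} {T} (C : T -> Prop) x : ~ C x -> delta_set (R:=R) C x = +oo%E.
Proof. by move=> h; rewrite /delta_set asboolF. Qed.

Section GQ.
Context {R : realType} {n : nat} (P : 'M[R]_n) (HP : P^T *m P = 1%:M).
Variables (c : 'I_n -> 'I_n -> R) (Zs : 'I_n -> 'I_n -> bool).
Hypothesis Hc : forall i j, 0 <= c i j.

Definition Lset (W : 'M[R]_n) : Prop := symS W /\ forall i j, Zs i j -> tl P W i j = 0.
Definition Qv (W : 'M[R]_n) : R := \sum_i \sum_j c i j * (tl P W i j) ^+ 2.
Definition hq (W : 'M[R]_n) : \bar R := ((Qv W)%:E + delta_set Lset W)%E.
Definition gq (W D : 'M[R]_n) : R := 2 * \sum_i \sum_j c i j * tl P W i j * tl P D i j.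

Lemma Qv_ge0 W : 0 <= Qv W.
Proof. by apply: sumr_ge0 => i _; apply: sumr_ge0 => j _; apply: mulr_ge0 => //; exact: sqr_ge0. Qed.

Lemma Qv_exp W s D : Qv (W + s *: D) = Qv W + s * gq W D + s ^+ 2 * Qv D.
Proof.
rewrite /Qv /gq tlD tlZ !mulr_sumr -!big_split /=; apply: eq_bigr => i _.
rewrite !mulr_sumr -!big_split /=; apply: eq_bigr => j _.
rewrite !mxE; ring.
Qed.

Lemma Qv0 : Qv 0 = 0.
Proof. by rewrite /Qv big1 // => i _; rewrite big1 // => j _; rewrite tl0 mxE expr0n /= mulr0. Qed.

Lemma gqDl W1 W2 D : gq (W1 + W2) D = gq W1 D + gq W2 D.
Proof.
rewrite /gq tlD.
have -> : \sum_i \sum_j c i j * (tl P W1 + tl P W2) i j * tl P D i j =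
  \sum_i \sum_j c i j * tl P W1 i j * tl P D i j + \sum_i \sum_j c i j * tl P W2 i j * tl P D i j.
  rewrite -big_split /=; apply: eq_bigr => i _.
  rewrite -big_split /=; apply: eq_bigr => j _; rewrite !mxE; ring.
ring.
Qed.

Lemma gqZl a W D : gq (a *: W) D = a * gq W D.
Proof.
rewrite /gq tlZ.
have -> : \sum_i \sum_j c i j * (a *: tl P W) i j * tl P D i j =
  a * \sum_i \sum_j c i j * tl P W i j * tl P D i j.
  rewrite mulr_sumr; apply: eq_bigr => i _.
  rewrite mulr_sumr; apply: eq_bigr => j _; rewrite !mxE; ring.
ring.
Qed.

Lemma gqNr W D : gq W (- D) = - gq W D.
Proof.
rewrite /gq tlN.
have -> : \sum_i \sum_j c i j * tl P W i j * (- tl P D) i j =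
  - \sum_i \sum_j c i j * tl P W i j * tl P D i j.
  rewrite -sumrN; apply: eq_bigr => i _.
  rewrite -sumrN; apply: eq_bigr => j _; rewrite !mxE; ring.
ring.
Qed.

Lemma symS0 : symS (0 : 'M[R]_n). Proof. by rewrite /symS /= trmx0. Qed.
Lemma symSD A B : symS A -> symS B -> symS (A + B :> 'M[R]_n).
Proof. by rewrite /symS /= => hA hB; rewrite linearD /= hA hB. Qed.
Lemma symSZ a A : symS A -> symS (a *: A :> 'M[R]_n).
Proof. by rewrite /symS /= => hA; rewrite linearZ /= hA. Qed.
Lemma symSN A : symS A -> symS (- A :> 'M[R]_n).
Proof. by rewrite /symS /= => hA; rewrite linearN /= hA. Qed.

Lemma Lset0 : Lset 0.
Proof. by split; [exact: symS0| move=> i j _; rewrite tl0 mxE]. Qed.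
Lemma LsetD A B : Lset A -> Lset B -> Lset (A + B).
Proof.
move=> [hA1 hA2] [hB1 hB2]; split; first exact: symSD.
by move=> i j hij; rewrite tlD mxE hA2 // hB2 // addr0.
Qed.
Lemma LsetZ a A : Lset A -> Lset (a *: A).
Proof.
move=> [hA1 hA2]; split; first exact: symSZ.
by move=> i j hij; rewrite tlZ mxE hA2 // mulr0.
Qed.
Lemma LsetN {A} : Lset A -> Lset (- A).
Proof. by move=> h; rewrite -scaleN1r; apply: LsetZ. Qed.

Definition Mrel (W V : 'M[R]_n) : Prop :=
  Lset W /\ symS V /\ forall D, Lset D -> frob V D = gq W D.

Variable q : 'M[R]_n -> \bar R.
Hypothesis Hq : forall W, symS W -> q W = hq W.

Lemma hq_fin W : Lset W -> hq W = (Qv W)%:E.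
Proof. by move=> h; rewrite /hq delta_setT // adde0. Qed.

Lemma hq_inf W : ~ Lset W -> hq W = +oo%E.
Proof. by move=> h; rewrite /hq delta_setF // addey. Qed.

Lemma fin_Lset {W} : symS W -> q W \is a fin_num -> Lset W.
Proof.
move=> hS; rewrite Hq //; case: (pselect (Lset W)) => // h.
by rewrite hq_inf.
Qed.

Lemma reg_Mrel {W V} : reg_subgrad (@symS R n) (@frob R n) q W V -> Mrel W V.
Proof.
move=> [hW [hV [hfin hreg]]].
have hL := fin_Lset hW hfin.
split => //; split => // D hD.
suff key : forall D, Lset D -> frob V D - gq W D <= 0.
  have h1 := key D hD; have h2 := key (- D) (LsetN hD).
  rewrite frobNr gqNr in h2; lra.
move=> {}D {}hD; rewrite leNgt; apply/negP => ha.
set a := frob V D - gq W D in ha.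
have nD0 : 0 <= `|D| by [].
have QD0 := Qv_ge0 D.
pose e := a / (2 * (`|D| + 1)).
have e0 : 0 < e by apply: divr_gt0 => //; lra.
have [d [d0 hd]] := hreg e e0.
pose s := Num.min (d / (2 * (`|D| + 1))) (a / (4 * (Qv D + 1))).
have s0 : 0 < s by rewrite lt_min; apply/andP; split; apply: divr_gt0 => //; lra.
have sd : s * `|D| < d.
  have : s <= d / (2 * (`|D| + 1)) by rewrite ge_min lexx.
  rewrite ler_pdivlMr; last lra.
  move=> h; nra.
have sQ : s * Qv D <= a / 4.
  have : s <= a / (4 * (Qv D + 1)) by rewrite ge_min lexx orbT.
  rewrite ler_pdivlMr; last lra.
  move=> h; nra.
have eD : e * `|D| <= a / 2.
  rewrite /e mulrAC ler_pdivrMr; last lra.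
  nra.
have hS' : symS (W + s *: D) by apply: symSD => //; apply: symSZ; case: hD.
have := hd (W + s *: D) hS'.
rewrite addrAC subrr add0r normrZ gtr0_norm // => /(_ sd).
rewrite !Hq // !hq_fin //; last by apply: LsetD => //; apply: LsetZ.
rewrite -EFinD lee_fin Qv_exp frobZr => h.
have : s * a <= s * (e * `|D|) + s * (s * Qv D).
  rewrite /a; nra.
move=> h2.
have h3 : a <= e * `|D| + s * Qv D by move: h2; rewrite -mulrDr (ler_pM2l s0).
lra.
Qed.

Lemma Mrel_reg {W V} : Mrel W V -> reg_subgrad (@symS R n) (@frob R n) q W V.
Proof.
move=> [hL [hV hM]].
have hW : symS W by case: hL.
split => //; split => //; split.
  by rewrite Hq // hq_fin.
move=> e e0; exists 1; split => // z' hz' _.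
rewrite (Hq _ hW) hq_fin // (Hq _ hz').
case: (pselect (Lset z')) => hz; last by rewrite hq_inf // leey.
rewrite hq_fin // -EFinD lee_fin.
have hDL : Lset (z' - W) by apply: LsetD => //; apply: LsetN.
have hz'E : z' = W + 1 *: (z' - W) by rewrite scale1r addrC subrK.
have -> : Qv z' = Qv W + gq W (z' - W) + Qv (z' - W).
  by rewrite {1}hz'E Qv_exp expr1n !mul1r.
rewrite hM //.
have := Qv_ge0 (z' - W); have : 0 <= e * `|z' - W| by apply: mulr_ge0 => //; lra.
lra.
Qed.

Lemma lim_Mrel W V : lim_subgrad (@symS R n) (@frob R n) q W V <-> Mrel W V.
Proof.
split.
- move=> [hW [hV [hfin [z_ [v_ [hz [hqz [hreg hv]]]]]]]].
  have hL := fin_Lset hW hfin.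
  split => //; split => // D hD.
  have hM k := reg_Mrel (hreg k).
  have e1 : (fun k => frob (v_ k) D) @ \oo --> frob V D.
    rewrite frobE; under eq_fun do rewrite frobE.
    apply: cvg_sumI => i; apply: cvg_sumI => j.
    apply: cvgM; [exact: cvg_entry | exact: cvg_cst].
  have e2 : (fun k => frob (v_ k) D) @ \oo --> gq W D.
    have -> : (fun k => frob (v_ k) D) = (fun k => gq (z_ k) D).
      by apply: funext => k; have [_ [_ ->]] := hM k.
    apply: cvgM; first exact: cvg_cst.
    apply: cvg_sumI => i; apply: cvg_sumI => j.
    apply: cvgM; last exact: cvg_cst.
    apply: cvgM; first exact: cvg_cst.
    exact: cvg_tl.
  exact: (cvg_unique _ e1 e2).
- move=> hM; have hreg := Mrel_reg hM.
  case: hM => hL [hV _]; have hW : symS W by case: hL.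
  split => //; split => //; split; first by rewrite Hq // hq_fin.
  exists (fun=> W), (fun=> V); split; first exact: cvg_cst.
  split; first exact: cvg_cst.
  split => //; exact: cvg_cst.
Qed.

Lemma gqf_hq : gen_quad_form (@symS R n) (@frob R n) q.
Proof.
split.
  by rewrite Hq ?hq_fin ?Qv0 //; [exact: Lset0 | exact: symS0].
split; first by apply/lim_Mrel; split; [exact: Lset0|split; [exact: symS0|move=> D _; rewrite frobC /frob mulmx0 mxtrace0 /gq big1 ?mulr0 // => i _; rewrite big1 // => j _; rewrite tl0 mxE; ring]].
split.
- move=> z1 v1 z2 v2 /lim_Mrel [h1 [h2 h3]] /lim_Mrel [h4 [h5 h6]]; apply/lim_Mrel.
  split; first exact: LsetD.
  split; first exact: symSD.
  by move=> D hD; rewrite frobC frobDr !(frobC D) h3 // h6 // gqDl.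
- move=> a z v /lim_Mrel [h1 [h2 h3]]; apply/lim_Mrel.
  split; first exact: LsetZ.
  split; first exact: symSZ.
  by move=> D hD; rewrite frobC frobZr (frobC D) h3 // gqZl.
Qed.

End GQ.


Section Core.
Context {R : realType} {n : nat} (P : 'M[R]_n) (HP : P^T *m P = 1%:M).
Variables mu nu : 'I_n -> R.
Hypothesis Hnd : forall i, (0 < mu i /\ nu i = 0) \/ (mu i = 0 /\ nu i < 0).

Lemma mu_ge0 i : 0 <= mu i. Proof. by case: (Hnd i) => [[h _]|[h _]]; lra. Qed.
Lemma nu_le0 i : nu i <= 0. Proof. by case: (Hnd i) => [[_ h]|[_ h]]; lra. Qed.
Lemma nuK i : nu i < 0 -> mu i = 0. Proof. by case: (Hnd i) => [[_ h]|[h _]]; lra. Qed.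
Lemma muJ i : 0 < mu i -> nu i = 0. Proof. by case: (Hnd i) => [[_ h]|[h _]]; lra. Qed.
Lemma nKJ i : ~~ (nu i < 0) -> 0 < mu i. Proof. by case: (Hnd i) => [[h _]|[_ h]] //; rewrite h. Qed.

Definition Zm := utl P (dg mu).
Definition Ym := utl P (dg nu).
Definition cc i j := if (0 < mu i) && (nu j < 0) then - nu j / mu i else 0.
Definition c2 i j := 2 * cc i j.
Definition ZK i j := (nu i < 0) && (nu j < 0).
Definition phi := hq P c2 ZK.
Definition Dl t u := sd_quot (@frob R n) (@delta_psd R n) Zm Ym t u.

Lemma cc_ge0 i j : 0 <= cc i j.
Proof.
rewrite /cc; case: ifP => // /andP[h1 h2]; apply: divr_ge0; lra.
Qed.
Lemma c2_ge0 i j : 0 <= c2 i j.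
Proof. by rewrite /c2; apply: mulr_ge0 => //; exact: cc_ge0. Qed.

Lemma dg_sym (m : 'I_n -> R) : (dg m)^T = dg m.
Proof. by rewrite /dg tr_diag_mx. Qed.

Lemma qf_dg (m : 'I_n -> R) x : qf (dg m) x = \sum_p m p * x p ^+ 2.
Proof. by rewrite qfE bf_dg; apply: eq_bigr => p _; rewrite expr2 mulrA. Qed.

Lemma qf_dg_ge0 x : 0 <= qf (dg mu) x.
Proof. by rewrite qf_dg; apply: sumr_ge0 => p _; apply: mulr_ge0; [exact: mu_ge0|exact: sqr_ge0]. Qed.

Lemma psd_Zm : psd Zm.
Proof. rewrite /Zm; apply/(psd_utl P HP); split; [exact: dg_sym|exact: qf_dg_ge0]. Qed.

Lemma dZm : delta_psd Zm = 0%E.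
Proof. by rewrite /delta_psd asboolT //; exact: psd_Zm. Qed.

Lemma frobY u : frob Ym u = \sum_j nu j * tl P u j j.
Proof. by rewrite (frob_tl P HP) /Ym (tl_utl P HP) frob_dg. Qed.

Lemma Dl_psd t u : 0 < t -> psd (Zm + t *: u) ->
  Dl t u = (- (2 / t) * \sum_j nu j * tl P u j j)%:E.
Proof.
move=> t0 hp; rewrite /Dl /sd_quot /delta_psd asboolT // -/(delta_psd Zm) dZm frobY.
rewrite sube0 -EFinN -EFinM; congr (_%:E); field; lra.
Qed.

Lemma Dl_npsd t u : 0 < t -> ~ psd (Zm + t *: u) -> Dl t u = +oo%E.
Proof.
move=> t0 hp; rewrite /Dl /sd_quot /delta_psd asboolF // -/(delta_psd Zm) dZm.
rewrite sube0 addye // mulyr gtr0_sg ?mul1e //.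
apply: divr_gt0 => //; exact: exprn_gt0.
Qed.

Lemma Zm_tu t u : Zm + t *: u = utl P (dg mu + t *: tl P u).
Proof. by rewrite /Zm utlD utlZ (utl_tl P HP). Qed.

Lemma qf_M t U x : qf (dg mu + t *: U) x = \sum_p mu p * x p ^+ 2 + t * qf U x.
Proof. by rewrite !qfE bfMD bfMZ -qfE qf_dg. Qed.

Lemma psd_tu {t u} : psd (Zm + t *: u) ->
  forall x, 0 <= \sum_p mu p * x p ^+ 2 + t * qf (tl P u) x.
Proof. by rewrite Zm_tu => /(psd_utl P HP) [_ h] x; rewrite -qf_M. Qed.

Lemma tu_psd t u : symS u ->
  (forall x, 0 <= \sum_p mu p * x p ^+ 2 + t * qf (tl P u) x) -> psd (Zm + t *: u).
Proof.
move=> hu h; rewrite Zm_tu; apply/(psd_utl P HP); split.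
  by rewrite linearD /= linearZ /= dg_sym (tl_sym P).
by move=> x; rewrite qf_M.
Qed.

Lemma K2 {t u j j'} s : 0 < t -> symS u -> psd (Zm + t *: u) -> nu j < 0 -> nu j' < 0 ->
  0 <= tl P u j j + 2 * s * tl P u j j' + s ^+ 2 * tl P u j' j'.
Proof.
move=> t0 hu hp hj hj'.
have hs : (tl P u)^T = tl P u by apply: (tl_sym P).
have hU : tl P u j' j = tl P u j j' by rewrite -{1}hs mxE.
have := psd_tu hp (fun p => ev j p + s * ev j' p).
have -> : \sum_p mu p * (ev j p + s * ev j' p) ^+ 2 = 0.
  apply: big1 => p _; rewrite /ev.
  case: (eqVneq p j) => [->|pj]; first by rewrite nuK // mul0r.
  case: (eqVneq p j') => [->|pj']; first by rewrite nuK // mul0r.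
  by rewrite mulr0 addr0 expr0n /= mulr0.
rewrite add0r qfE bfDl !bfDr !bfZl !bfZr !bf_ev hU => h.
have -> : tl P u j j + 2 * s * tl P u j j' + s ^+ 2 * tl P u j' j' = tl P u j j + s * tl P u j j' + (s * tl P u j j' + s * (s * tl P u j' j')) by ring.
by rewrite -(pmulr_rge0 _ t0).
Qed.

Lemma K2d {t u j} : 0 < t -> symS u -> psd (Zm + t *: u) -> nu j < 0 -> 0 <= tl P u j j.
Proof. by move=> t0 hu hp hj; have := @K2 t u j j 0 t0 hu hp hj hj; rewrite !mulr0 expr0n /= mul0r !addr0. Qed.

Definition bv (U : 'M[R]_n) j := fun p => if 0 < mu p then U p j / mu p else 0.
Definition Sj (U : 'M[R]_n) j := \sum_p (if 0 < mu p then U p j ^+ 2 / mu p else 0).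
Definition Rj (U : 'M[R]_n) j := qf U (bv U j).

Lemma K1 {t u j} : 0 < t -> symS u -> psd (Zm + t *: u) -> nu j < 0 ->
  t * Sj (tl P u) j - t ^+ 2 * Rj (tl P u) j <= tl P u j j.
Proof.
move=> t0 hu hp hj.
set U := tl P u.
have hs : U^T = U by apply: (tl_sym P).
have hU p q : U q p = U p q by rewrite -{1}hs mxE.
have := psd_tu hp (fun p => ev j p + (- t) * bv U j p).
have -> : \sum_p mu p * (ev j p + - t * bv U j p) ^+ 2 = t ^+ 2 * Sj U j.
  rewrite /Sj mulr_sumr; apply: eq_bigr => p _; rewrite /ev /bv.
  case: (eqVneq p j) => [->|pj].
    by rewrite (nuK _ hj) ltxx /= !mulr0 !mul0r.
  case: ifP => hm; last by rewrite !mulr0 addr0 expr2 !mulr0.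
  by rewrite add0r; field; rewrite gt_eqF.
have e1 : bf U (ev j) (bv U j) = Sj U j.
  rewrite bf_evl /Sj; apply: eq_bigr => q _; rewrite /bv.
  case: ifP => hm; last by rewrite mulr0.
  by rewrite hU expr2 mulrA.
have e2 : bf U (bv U j) (ev j) = Sj U j.
  rewrite bf_evr /Sj; apply: eq_bigr => q _; rewrite /bv.
  case: ifP => hm; last by rewrite mul0r.
  by rewrite expr2 mulrAC.
rewrite qfE bfDl !bfDr !bfZl !bfZr bf_ev e1 e2 -qfE -/(Rj U j) => h.
rewrite -/U in h.
have e3 : t ^+ 2 * Sj U j + t * (U j j + - t * Sj U j + (- t * Sj U j + - t * (- t * Rj U j))) = t * (U j j - t * Sj U j + t ^+ 2 * Rj U j) by ring.
rewrite e3 pmulr_rge0 // in h.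
lra.
Qed.


Lemma gram_expand (F : 'M[R]_n) t :
  (1%:M + t *: F)^T *m dg mu *m (1%:M + t *: F) =
  dg mu + t *: (F^T *m dg mu + dg mu *m F) + t ^+ 2 *: (F^T *m dg mu *m F).
Proof.
have -> : (1%:M + t *: F)^T = 1%:M + t *: F^T.
  by apply/matrixP => i j; rewrite !mxE eq_sym.
rewrite mulmxDl mul1mx !mulmxDr mulmx1.
by rewrite mulmxDl -!scalemxAr -!scalemxAl scalerA -expr2 scalerDr !addrA.
Qed.

Definition Ft (U : 'M[R]_n) : 'M[R]_n := \matrix_(p, q)
  (if 0 < mu p then (if nu q < 0 then U p q / mu p else U p q / (2 * mu p)) else 0).
Definition Et (U : 'M[R]_n) := (Ft U)^T *m dg mu *m Ft U.
Definition E0 (W : 'M[R]_n) := utl P (Et (tl P W)).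

Lemma Ft_pq U p q : Ft U p q =
  if 0 < mu p then (if nu q < 0 then U p q / mu p else U p q / (2 * mu p)) else 0.
Proof. by rewrite mxE. Qed.

Lemma Et_jj U j : Et U j j = \sum_p mu p * (Ft U p j) ^+ 2.
Proof.
rewrite /Et /dg mul_mx_diag mxE; apply: eq_bigr => p _.
rewrite !mxE; ring.
Qed.

Lemma Ft_key {W} : Lset P ZK W -> (Ft (tl P W))^T *m dg mu + dg mu *m Ft (tl P W) = tl P W.
Proof.
move=> [hS hZ].
have hs : (tl P W)^T = tl P W by apply: (tl_sym P).
set U := tl P W in hs hZ *; clearbody U.
have hU p q : U q p = U p q by rewrite -{1}hs mxE.
apply/matrixP => p q; rewrite /dg mul_diag_mx mul_mx_diag !mxE.
case: (Hnd p) => [[hp1 hp2]|[hp1 hp2]]; case: (Hnd q) => [[hq1 hq2]|[hq1 hq2]].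
- rewrite hp1 hq1 hp2 hq2 ltxx /= hU.
  have mp0 : mu p != 0 by rewrite gt_eqF.
  have mq0 : mu q != 0 by rewrite gt_eqF.
  by field; rewrite mp0 mq0.
- rewrite hp1 hq2 hq1 ltxx /=; field; by rewrite gt_eqF.
- rewrite hq1 hp2 hp1 ltxx /= hU; field; by rewrite gt_eqF.
- rewrite hp1 hq1 ltxx /= (hZ p q); first ring.
  by rewrite /ZK hp2 hq2.
Qed.

Lemma psd_gram (Y : 'M[R]_n) : psd (utl P (Y^T *m dg mu *m Y)).
Proof.
apply/(psd_utl P HP); split.
  by rewrite !trmx_mul trmxK dg_sym mulmxA.
move=> x.
have hx : x = (fun p => (\col_k x k : 'cV[R]_n) p 0) by apply: funext => p; rewrite mxE.
rewrite {1}hx -quadE.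
have -> : (\col_k x k)^T *m (Y^T *m dg mu *m Y) *m \col_k x k =
  (Y *m \col_k x k)^T *m dg mu *m (Y *m \col_k x k).
  by rewrite trmx_mul !mulmxA.
by rewrite quadE; exact: qf_dg_ge0.
Qed.

Lemma rec_eq t W : Zm + t *: (W + t *: E0 W) =
  utl P (dg mu + t *: tl P W + t ^+ 2 *: Et (tl P W)).
Proof.
rewrite /Zm /E0 !utlD !utlZ (utl_tl P HP) scalerDr scalerA -expr2 addrA.
by [].
Qed.

Lemma rec_psd t W : Lset P ZK W -> psd (Zm + t *: (W + t *: E0 W)).
Proof.
move=> hL; rewrite rec_eq -{1}(Ft_key hL) /Et -gram_expand.
exact: psd_gram.
Qed.

Lemma rec_val t W : 0 < t -> Lset P ZK W -> Dl t (W + t *: E0 W) = (Qv P c2 W)%:E.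
Proof.
move=> t0 hL; rewrite Dl_psd //; last exact: rec_psd.
congr (_%:E).
case: hL => hS hZ.
rewrite /E0 tlD tlZ (tl_utl P HP) /Qv.
set U := tl P W in hZ *; clearbody U.
have -> : \sum_j nu j * (U + t *: Et U) j j = t * \sum_j nu j * Et U j j.
  rewrite mulr_sumr; apply: eq_bigr => j _; rewrite [(U + _) j j]mxE [X in _ + X]mxE.
  suff h : nu j * U j j = 0 by rewrite mulrDr h add0r; ring.
    case: (boolP (nu j < 0)) => h; first by rewrite (hZ j j) ?mulr0 // /ZK h.
    have -> : nu j = 0 by have := nu_le0 j; move: h; rewrite -leNgt => h1 h2; apply/eqP; rewrite eq_le h1 h2.
    by rewrite mul0r.
have -> : - (2 / t) * (t * \sum_j nu j * Et U j j) = \sum_j (- 2) * (nu j * Et U j j).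
  rewrite -mulr_sumr; field; lra.
under eq_bigr => j _ do rewrite Et_jj mulr_sumr mulr_sumr.
rewrite exchange_big /=; apply: eq_bigr => p _; apply: eq_bigr => j _.
rewrite Ft_pq /c2 /cc.
case: (boolP (0 < mu p)) => hp; case: (boolP (nu j < 0)) => hj /=.
- by field; rewrite gt_eqF.
- have -> : nu j = 0 by have := nu_le0 j; move: hj; rewrite -leNgt => h1 h2; apply/eqP; rewrite eq_le h1 h2.
  ring.
- ring.
- ring.
Qed.


Definition LBf t u := Qv P c2 u - 2 * t * \sum_j (if nu j < 0 then - nu j * Rj (tl P u) j else 0).
Definition Tf u := \sum_p (- nu p) * tl P u p p.

Lemma nu0 j : ~~ (nu j < 0) -> nu j = 0.
Proof.
move=> h; have := nu_le0 j; move: h; rewrite -leNgt => h1 h2.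
by apply/eqP; rewrite eq_le h1 h2.
Qed.

Lemma Dl_psdT t u : 0 < t -> psd (Zm + t *: u) -> Dl t u = (2 / t * Tf u)%:E.
Proof.
move=> t0 hp; rewrite Dl_psd //; congr (_%:E).
have -> : Tf u = - \sum_j nu j * tl P u j j.
  by rewrite /Tf -sumrN; apply: eq_bigr => p _; ring.
ring.
Qed.

Lemma Qv_S u : Qv P c2 u = \sum_j (if nu j < 0 then 2 * (- nu j) * Sj (tl P u) j else 0).
Proof.
rewrite /Qv exchange_big /=; apply: eq_bigr => j _.
case: ifP => hj.
  rewrite /Sj mulr_sumr; apply: eq_bigr => p _; rewrite /c2 /cc hj andbT.
  case: ifP => hp; last by rewrite !mulr0 mul0r.
  by field; rewrite gt_eqF.
by apply: big1 => p _; rewrite /c2 /cc hj andbF mulr0 mul0r.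
Qed.

Lemma LB_le t u : 0 < t -> symS u -> psd (Zm + t *: u) -> LBf t u <= 2 / t * Tf u.
Proof.
move=> t0 hu hp.
rewrite /LBf Qv_S /Tf mulr_sumr mulr_sumr -sumrB.
apply: ler_sum => j _.
case: ifP => hj.
  have h := K1 t0 hu hp hj.
  have a0 : 0 <= 2 * (- nu j) / t by apply: divr_ge0 => //; lra.
  have h2 := ler_wpM2l a0 h.
  have e1 : 2 * (- nu j) / t * (t * Sj (tl P u) j - t ^+ 2 * Rj (tl P u) j) =
    2 * - nu j * Sj (tl P u) j - 2 * t * (- nu j * Rj (tl P u) j) by field; lra.
  have e2 : 2 * (- nu j) / t * tl P u j j = 2 / t * (- nu j * tl P u j j) by ring.
  by rewrite -e1 -e2.
by rewrite nu0 ?hj // oppr0 !mul0r !mulr0 subr0.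
Qed.

Lemma Tterm_ge0 t u p : 0 < t -> symS u -> psd (Zm + t *: u) -> 0 <= - nu p * tl P u p p.
Proof.
move=> t0 hu hp; case: (boolP (nu p < 0)) => hj.
  apply: mulr_ge0; first lra.
  exact: (K2d t0 hu hp hj).
by rewrite nu0 // oppr0 mul0r.
Qed.

Lemma cvg_Qv (c : 'I_n -> 'I_n -> R) (u_ : nat -> 'M[R]_n) W : u_ @ \oo --> W ->
  (fun k => Qv P c (u_ k)) @ \oo --> Qv P c W.
Proof.
move=> h; rewrite /Qv; apply: cvg_sumI => i; apply: cvg_sumI => j.
apply: cvgM; first exact: cvg_cst.
under eq_fun do rewrite expr2; rewrite expr2.
by apply: cvgM; exact: cvg_tl.
Qed.

Lemma cvg_Rj (u_ : nat -> 'M[R]_n) W j : u_ @ \oo --> W ->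
  (fun k => Rj (tl P (u_ k)) j) @ \oo --> Rj (tl P W) j.
Proof.
move=> h; rewrite /Rj /qf; apply: cvg_sumI => p; apply: cvg_sumI => q.
have hb : forall r, (fun k => bv (tl P (u_ k)) j r) @ \oo --> bv (tl P W) j r.
  move=> r; rewrite /bv; case: ifP => _; last exact: cvg_cst.
  by apply: cvgM; [exact: cvg_tl|exact: cvg_cst].
by apply: cvgM; [apply: cvgM; [exact: hb|exact: cvg_tl]|exact: hb].
Qed.

Lemma cvg_LB {t_ : nat -> R} {u_ : nat -> 'M[R]_n} {W} :
  t_ @ \oo --> 0 -> u_ @ \oo --> W ->
  (fun k => LBf (t_ k) (u_ k)) @ \oo --> Qv P c2 W.
Proof.
move=> ht hu.
have -> : Qv P c2 W = Qv P c2 W - 2 * 0 * \sum_j (if nu j < 0 then - nu j * Rj (tl P W) j else 0).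
  by rewrite mulr0 mul0r subr0.
apply: cvgB; first exact: cvg_Qv.
apply: cvgM; first by apply: cvgM; [exact: cvg_cst|exact: ht].
apply: cvg_sumI => j; case: ifP => _; last exact: cvg_cst.
by apply: cvgM; [exact: cvg_cst|exact: cvg_Rj].
Qed.


Lemma sum_ge1 {f : 'I_n -> R} j : (forall p, 0 <= f p) -> f j <= \sum_p f p.
Proof.
move=> h; rewrite (bigD1 j) //= lerDl; exact: sumr_ge0.
Qed.

Lemma sum_ge2 {f : 'I_n -> R} {j j'} : j != j' -> (forall p, 0 <= f p) -> f j + f j' <= \sum_p f p.
Proof.
move=> hjj h; rewrite (bigD1 j) //= (bigD1 j') /=; last by rewrite eq_sym.
by rewrite addrA lerDl; apply: sumr_ge0.
Qed.

Lemma lower_seq {t_ : nat -> R} {u_ : nat -> 'M[R]_n} {W} :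
  (forall k, 0 < t_ k) -> t_ @ \oo --> 0 -> u_ @ \oo --> W -> (forall k, symS (u_ k)) -> symS W ->
  (phi W <= limn_einf (fun k => Dl (t_ k) (u_ k)))%E.
Proof.
move=> ht0 ht hu hS hW.
case: (pselect (Lset P ZK W)) => hL.
  rewrite /phi /hq delta_setT // adde0.
  apply: liminf_ge => M HM; rewrite lte_fin in HM.
  near=> k.
  have hk : M < LBf (t_ k) (u_ k).
    by near: k; exact: (cvgr_gt _ (cvg_LB ht hu) M HM).
  case: (pselect (psd (Zm + t_ k *: u_ k))) => hp.
    rewrite Dl_psdT // lee_fin; apply: le_trans (ltW hk) _.
    exact: LB_le.
  by rewrite Dl_npsd // leey.
rewrite /phi /hq delta_setF // addey.
have [j [j' [hZ hw]]] : exists j j', ZK j j' /\ tl P W j j' <> 0.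
  apply: contrapT => hne; apply: hL; split => // i j hij.
  by apply: contrapT => hw; apply: hne; exists i, j.
move: hZ; rewrite /ZK => /andP [hj hj'].
suff [a [a0 ha]] : exists a, 0 < a /\
    \forall k \near \oo, psd (Zm + t_ k *: u_ k) -> a <= Tf (u_ k).
  apply: liminf_ge => M _.
  have hz : 0 < a / (`|M| + 1) by apply: divr_gt0 => //; have := normr_ge0 M; lra.
  near=> k.
  have hk : t_ k < a / (`|M| + 1) by near: k; exact: (cvgr_lt _ ht _ hz).
  have hT0 : psd (Zm + t_ k *: u_ k) -> a <= Tf (u_ k) by near: k; exact: ha.
  case: (pselect (psd (Zm + t_ k *: u_ k))) => hp; last by rewrite Dl_npsd // leey.
  rewrite Dl_psdT // lee_fin.
  have hT := hT0 hp.
  have t0 := ht0 k.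
  rewrite -(ler_pM2r t0).
  have -> : 2 / t_ k * Tf (u_ k) * t_ k = 2 * Tf (u_ k) by field; lra.
  have hMt := ler_wpM2r (ltW t0) (ler_norm M).
  rewrite ltr_pdivlMr in hk; last by have := normr_ge0 M; lra.
  have := normr_ge0 M; nra.
have hU := cvg_tl P _ _ hu.
case: (eqVneq j j') => [hjj|hjj].
  subst j'.
  case: (ltgtP (tl P W j j) 0) => hwj; last by [].
  - exists 1; split => //.
    near=> k => hp; exfalso.
    have h1 : tl P (u_ k) j j < 0 by near: k; exact: (cvgr_lt _ (hU j j) 0 hwj).
    have := K2d (ht0 k) (hS k) hp hj; lra.
  - exists (- nu j * (tl P W j j / 2)); split; first by apply: mulr_gt0; lra.
    near=> k => hp.
    have h1 : tl P W j j / 2 < tl P (u_ k) j j.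
      by near: k; apply: (cvgr_gt _ (hU j j)); lra.
    rewrite /Tf; apply: (le_trans _ (sum_ge1 j (fun p => Tterm_ge0 _ _ p (ht0 k) (hS k) hp))).
    by apply: ler_wpM2l; lra.
pose w := tl P W j j'.
pose s : R := if 0 < w then -1 else 1.
have hsw : s * w < 0.
  rewrite /s; case: ifP => h; first lra.
  have : w != 0 by apply/eqP.
  move: h; rewrite ltNge => /negbFE h1 h2; rewrite mul1r lt_neqAle h1 andbT //.
have hs2 : s ^+ 2 = 1 by rewrite /s; case: ifP => _; rewrite expr2; lra.
pose m := Num.min (- nu j) (- nu j').
have m0 : 0 < m by rewrite lt_min; apply/andP; split; lra.
exists (m * (- s * w)); split; first by apply: mulr_gt0 => //; lra.
near=> k => hp.
have h1 : s * tl P (u_ k) j j' < s * w / 2.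
  near: k; apply: (cvgr_lt (s * w)); last by lra.
  by apply: cvgM; [exact: cvg_cst|exact: hU].
have h2 := K2 s (ht0 k) (hS k) hp hj hj'.
rewrite hs2 mul1r in h2.
have d1 := K2d (ht0 k) (hS k) hp hj.
have d2 := K2d (ht0 k) (hS k) hp hj'.
rewrite /Tf; apply: (le_trans _ (sum_ge2 hjj (fun p => Tterm_ge0 _ _ p (ht0 k) (hS k) hp))).
have mj : m <= - nu j by rewrite ge_min lexx.
have mj' : m <= - nu j' by rewrite ge_min lexx orbT.
have e1 := ler_wpM2r d1 mj.
have e2 := ler_wpM2r d2 mj'.
have e3 : m * (- s * w) <= m * (tl P (u_ k) j j + tl P (u_ k) j' j').
  apply: ler_wpM2l; first lra.
  nra.
nra.
Unshelve. all: by end_near.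
Qed.


Lemma Et_sym U : (Et U)^T = Et U.
Proof. by rewrite /Et !trmx_mul trmxK dg_sym mulmxA. Qed.

Lemma E0_sym W : symS (E0 W).
Proof. by rewrite /symS /= /E0; apply: (utl_sym P); exact: Et_sym. Qed.

Lemma cvg_dist_inv (x_ : nat -> 'M[R]_n) (x : 'M[R]_n) :
  (forall k, `|x_ k - x| < k.+1%:R^-1) -> x_ @ \oo --> x.
Proof.
move=> h; apply/cvgrPdist_lt => _/posnumP[e].
near=> k; rewrite distrC; apply: lt_trans (h k) _.
by near: k; exact: near_infty_natSinv_lt.
Unshelve. all: by end_near.
Qed.

Lemma cvg_dist_invR (x_ : nat -> R) (x : R) :
  (forall k, `|x_ k - x| < k.+1%:R^-1) -> x_ @ \oo --> x.
Proof.
move=> h; apply/cvgrPdist_lt => _/posnumP[e].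
near=> k; rewrite distrC; apply: lt_trans (h k) _.
by near: k; exact: near_infty_natSinv_lt.
Unshelve. all: by end_near.
Qed.

Lemma d2_eq W : symS W ->
  second_subderiv (@symS R n) (@frob R n) (@delta_psd R n) Zm Ym W = phi W.
Proof.
move=> hW; apply/eqP; rewrite eq_le; apply/andP; split.
- apply: ge_ereal_sup => _ [d /= d0 <-].
  case: (pselect (Lset P ZK W)) => hL; last by rewrite /phi hq_inf // leey.
  have nE := normr_ge0 (E0 W).
  pose t := Num.min (d / 2) (d / (2 * (`|E0 W| + 1))).
  have t0 : 0 < t by rewrite lt_min; apply/andP; split; apply: divr_gt0 => //; lra.
  have t1 : t <= d / 2 by rewrite ge_min lexx.
  have td : t < d by lra.
  have tE : t * `|E0 W| < d.
    have : t <= d / (2 * (`|E0 W| + 1)) by rewrite ge_min lexx orbT.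
    rewrite ler_pdivlMr; last lra.
    move=> h; nra.
  apply: (@le_trans _ _ (Dl t (W + t *: E0 W))).
    apply: ereal_inf_lbound; exists t, (W + t *: E0 W); split; first by rewrite t0 td.
    split; first by apply: symSD => //; apply: symSZ; exact: E0_sym.
    split; last by [].
    have -> : W + t *: E0 W - W = t *: E0 W by rewrite addrC addKr.
    by rewrite normrZ gtr0_norm.
  by rewrite rec_val // /phi hq_fin //.
- apply: lee_real => M HM; rewrite leNgt; apply/negP => hlt.
  have hex : forall k : nat, exists tu : R * 'M[R]_n,
      (0 < tu.1 < k.+1%:R^-1) /\ symS tu.2 /\ `|tu.2 - W| < k.+1%:R^-1 /\
      (Dl tu.1 tu.2 < M%:E)%E.
    move=> k.
    have hd : 0 < k.+1%:R^-1 :> R by rewrite invr_gt0 ltr0n.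
    set Sd := [set y | exists t u, 0 < t < k.+1%:R^-1 /\ symS u /\
                `|u - W| < k.+1%:R^-1 /\ y = sd_quot (@frob R n) (@delta_psd R n) Zm Ym t u].
    have h1 : (ereal_inf Sd <= second_subderiv (@symS R n) (@frob R n) (@delta_psd R n) Zm Ym W)%E.
      by apply: ereal_sup_ubound; exists k.+1%:R^-1.
    have /ereal_inf_lt [y [t [u [h2 [h3 [h4 ->]]]]] h5] := le_lt_trans h1 hlt.
    by exists (t, u).
  have /choice [f hf] := hex.
  pose t_ k := (f k).1; pose u_ k := (f k).2.
  have ht0 k : 0 < t_ k by have [/andP [h _] _] := hf k.
  have ht : t_ @ \oo --> 0.
    apply: cvg_dist_invR => k; have [/andP [h1 h2] _] := hf k.
    by rewrite subr0 gtr0_norm.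
  have hu : u_ @ \oo --> W by apply: cvg_dist_inv => k; have [_ [_ [h _]]] := hf k.
  have hS k : symS (u_ k) by have [_ [h _]] := hf k.
  have := lower_seq ht0 ht hu hS hW.
  move=> /le_trans /(_ (limn_einf_sup _)).
  have : (limn_esup (fun k => Dl (t_ k) (u_ k)) <= M%:E)%E.
    apply: limsup_le => M' hM'; exists 0%N => // k _.
    have [_ [_ [_ h]]] := hf k; exact: (ltW (lt_trans h hM')).
  move=> h1 /le_trans /(_ h1) h2.
  by have := lt_le_trans HM h2; rewrite ltxx.
Qed.

Lemma tepi : twice_epi_diff (@symS R n) (@frob R n) (@delta_psd R n) Zm Ym.
Proof.
split; first by rewrite dZm.
move=> t_ ht0 ht W hW; split.
  by move=> u_ hS hu; rewrite d2_eq //; exact: lower_seq.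
case: (pselect (Lset P ZK W)) => hL.
  exists (fun k => W + t_ k *: E0 W); split.
    by move=> k; apply: symSD => //; apply: symSZ; exact: E0_sym.
  split.
    have : (fun k => W + t_ k *: E0 W) @ \oo --> W + 0 *: E0 W.
      by apply: cvgD; [exact: cvg_cst | apply: cvgZ; [exact: ht|exact: cvg_cst]].
    by rewrite scale0r addr0.
  rewrite d2_eq //; apply: limsup_le => M hM; exists 0%N => // k _.
  rewrite /= -/(Dl (t_ k) (W + t_ k *: E0 W)) rec_val //.
  by move: hM; rewrite /phi hq_fin // => /ltW.
exists (fun=> W); split => //; split; first exact: cvg_cst.
by rewrite d2_eq // /phi hq_inf // leey.
Qed.

Lemma gtd : gen_twice_diff (@symS R n) (@frob R n) (@delta_psd R n) Zm Ym.
Proof.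
split; first exact: tepi.
apply: (gqf_hq P c2 ZK); first exact: c2_ge0.
by move=> W hW; rewrite d2_eq.
Qed.

End Core.


Lemma penrose_uniq {R : realType} {n} (A X1 X2 : 'M[R]_n) : penrose A X1 -> penrose A X2 -> X1 = X2.
Proof.
move=> [a1 [b1 [c1 d1]]] [a2 [b2 [c2 d2]]].
have p1 : A *m X1 = A *m X2.
  have s1 : A *m X1 = X1^T *m A^T by rewrite -trmx_mul c1.
  have s2 : A^T = A^T *m X2^T *m A^T by rewrite -{1}a2 !trmx_mul mulmxA.
  have s3 : A *m X1 = (X1^T *m A^T) *m (X2^T *m A^T) by rewrite {1}s1 {1}s2 !mulmxA.
  rewrite -[X1^T *m A^T]trmx_mul -[X2^T *m A^T]trmx_mul c1 c2 in s3.
  by rewrite s3 mulmxA a1.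
have p2 : X1 *m A = X2 *m A.
  have s1 : X1 *m A = A^T *m X1^T by rewrite -trmx_mul d1.
  have s2 : A^T = A^T *m X2^T *m A^T by rewrite -{1}a2 !trmx_mul mulmxA.
  have s3 : X1 *m A = (A^T *m X2^T) *m (A^T *m X1^T) by rewrite {1}s1 {1}s2 !mulmxA.
  rewrite -[A^T *m X2^T]trmx_mul -[A^T *m X1^T]trmx_mul d1 d2 in s3.
  by rewrite s3 -!mulmxA (mulmxA A) a1.
by rewrite -b1 -mulmxA p1 mulmxA p2 b2.
Qed.

Section Final.
Context {R : realType} {n : nat} (P : 'M[R]_n) (HP : P^T *m P = 1%:M) (lam : 'I_n -> R).

Definition lp i := if 0 < lam i then lam i else 0.
Definition ln i := if lam i < 0 then lam i else 0.
Definition lpi i := if 0 < lam i then (lam i)^-1 else 0.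

Lemma utl_mul A B : utl P A *m utl P B = utl P (A *m B).
Proof. by rewrite /utl !mulmxA -[P *m A *m P^T *m P]mulmxA HP mulmx1. Qed.

Lemma tl_mul A B : tl P (A *m B) = tl P A *m tl P B.
Proof. by rewrite /tl !mulmxA -[P^T *m A *m P *m P^T]mulmxA (PPt P HP) mulmx1. Qed.

Lemma dg_mul (a b : 'I_n -> R) : dg a *m dg b = dg (fun i => a i * b i).
Proof. by rewrite /dg mulmx_diag; congr diag_mx; apply/rowP => i; rewrite !mxE. Qed.

Lemma utl_dg_sym (a : 'I_n -> R) : (utl P (dg a))^T = utl P (dg a).
Proof. by apply: (utl_sym P); exact: dg_sym. Qed.

Lemma pen_G : penrose (utl P (dg lp)) (utl P (dg lpi)).
Proof.
rewrite /penrose !utl_mul !dg_mul !utl_dg_sym.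
split; [|split; [|by split]]; congr (utl P (dg _)); apply: funext => i; rewrite /lp /lpi;
  by case: ifP => h; [field; rewrite gt_eqF | ring].
Qed.

Lemma mp_pinv_G : mp_pinv (utl P (dg lp)) = utl P (dg lpi).
Proof.
apply: (penrose_uniq (utl P (dg lp))); last exact: pen_G.
have h : exists X, [set X | penrose (utl P (dg lp)) X] X by exists (utl P (dg lpi)); exact: pen_G.
exact: (xgetPex _ h).
Qed.

Lemma Ups H : symS H ->
  - 2^-1 * Upsilon (utl P (dg lp)) (utl P (dg ln)) H =
  \sum_(i < n | 0 < lam i) \sum_(j < n | lam j < 0) (- lam j / lam i) * ((P^T *m H *m P) i j) ^+ 2.
Proof.
move=> hH.
have hs : (tl P H)^T = tl P H by apply: (tl_sym P).
change (P^T *m H *m P) with (tl P H).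
rewrite /Upsilon mp_pinv_G (frob_tl P HP) (tl_utl P HP) (tl_mul (H *m _) H) (tl_mul H (utl P _)) (tl_utl P HP) frob_dg.
set Ht := tl P H in hs *; clearbody Ht.
have hU p q : Ht q p = Ht p q by rewrite -{1}hs mxE.
have -> : \sum_i ln i * (Ht *m dg lpi *m Ht) i i = \sum_i \sum_k ln i * (Ht i k * lpi k * Ht k i).
  apply: eq_bigr => i _; rewrite /dg mul_mx_diag mxE mulr_sumr; apply: eq_bigr => k _.
  by rewrite !mxE.
set S := \sum_i \sum_k _.
have -> : - 2^-1 * (2 * S) = - S by field.
rewrite /S -sumrN.
under eq_bigr => i _ do rewrite -sumrN.
rewrite exchange_big /= [RHS]big_mkcond /=; apply: eq_bigr => i _.
case: ifP => hi.
  rewrite [RHS]big_mkcond /=; apply: eq_bigr => j _.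
  rewrite /ln /lpi hi hU; case: ifP => hj; first by field; rewrite gt_eqF.
  ring.
apply: big1 => j _; rewrite /lpi hi; ring.
Qed.

Lemma decomp G0 Y0 : psd G0 -> nsd Y0 -> frob G0 Y0 = 0 -> G0 + Y0 = utl P (dg lam) ->
  G0 = utl P (dg lp) /\ Y0 = utl P (dg ln).
Proof.
move=> hG hY hf hd.
have hs := tlD P G0 Y0; rewrite hd (tl_utl P HP) in hs.
have [hGs hGq] := (psd_tl P HP G0).1 hG.
have [hYs hYq] := (psd_tl P HP (- Y0)).1 hY.
rewrite tlN in hYs hYq.
have hsum : \sum_i \sum_j tl P G0 i j * tl P Y0 i j = 0 by rewrite -frobE -(frob_tl P HP).
suff [e1 e2] : tl P G0 = dg lp /\ tl P Y0 = dg ln.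
  by split; [rewrite -(utl_tl P HP G0) e1 | rewrite -(utl_tl P HP Y0) e2].
set Gt := tl P G0 in hs hGs hGq hsum *.
set Yt := tl P Y0 in hs hYs hYq hsum *.
clearbody Gt Yt.
have gii i : 0 <= Gt i i by have := hGq (ev i); rewrite qfE bf_ev.
have yii i : Yt i i <= 0 by have := hYq (ev i); rewrite qfE bf_ev mxE; lra.
have hij i j : dg lam i j = Gt i j + Yt i j by rewrite hs mxE.
have off i j : i != j -> Yt i j = - Gt i j.
  by move=> h; have := hij i j; rewrite dgE (negbTE h) => h'; lra.
have hterm i j : 0 <= - (Gt i j * Yt i j).
  case: (eqVneq i j) => [<-|h].
    by rewrite -mulrN; apply: mulr_ge0 => //; have := yii i; lra.
  by rewrite off // mulrN opprK -expr2 sqr_ge0.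
have hz i j : Gt i j * Yt i j = 0.
  have h1 : \sum_i \sum_j - (Gt i j * Yt i j) = 0.
    transitivity (- \sum_i \sum_j Gt i j * Yt i j); last by rewrite hsum oppr0.
    by rewrite -sumrN; apply: eq_bigr => i' _; rewrite sumrN.
  have h2 : \sum_j - (Gt i j * Yt i j) = 0 :=
    psumr_eq0P (fun i _ => sumr_ge0 _ (fun j _ => hterm i j)) h1 (i:=i) erefl.
  have h3 : - (Gt i j * Yt i j) = 0 := psumr_eq0P (fun j _ => hterm i j) h2 (i:=j) erefl.
  lra.
split; apply/matrixP => i j; rewrite dgE.
- case: (eqVneq i j) => [<-|h].
    have := hz i i; have := hij i i; rewrite dgE eqxx => hl.
    move/eqP; rewrite mulf_eq0 => /orP [/eqP g0|/eqP y0]; rewrite /lp.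
      by rewrite g0; case: ifP => //; have := yii i; lra.
    by rewrite y0 addr0 in hl; rewrite -hl; case: ifP => // hn; have := gii i; move: hn; rewrite -hl => /negbT; rewrite -leNgt; lra.
  have := hz i j; rewrite off // mulrN => /eqP; rewrite oppr_eq0 mulf_eq0 orbb.
  by move/eqP.
- case: (eqVneq i j) => [<-|h].
    have := hz i i; have := hij i i; rewrite dgE eqxx => hl.
    move/eqP; rewrite mulf_eq0 => /orP [/eqP g0|/eqP y0]; rewrite /ln.
      by rewrite g0 add0r in hl; rewrite -hl; case: ifP => // hn; have := yii i; move: hn; rewrite -hl => /negbT; rewrite -leNgt; lra.
    by rewrite y0; case: ifP => //; have := gii i; lra.
  rewrite off //; have := hz i j; rewrite off // mulrN => /eqP; rewrite oppr_eq0 mulf_eq0 orbb.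
  by move/eqP => ->; rewrite oppr0.
Qed.

End Final.


Section Epi.
Context {R : realType} {n : nat} (P : 'M[R]_n) (HP : P^T *m P = 1%:M) (lam : 'I_n -> R).

Definition muk (k : nat) (i : 'I_n) : R :=
  if 0 < lam i then lam i else if lam i == 0 then k.+1%:R^-1 else 0.

Lemma Hndk k : forall i, (0 < muk k i /\ ln lam i = 0) \/ (muk k i = 0 /\ ln lam i < 0).
Proof.
move=> i; rewrite /muk /ln.
case: (ltgtP (lam i) 0) => h /=.
- by right; split.
- by left; split.
- by left; split => //; rewrite invr_gt0 ltr0n.
Qed.

Definition cstar i j := if (0 < lam i) && (lam j < 0) then - lam j / lam i else 0.
Definition Zaff i j := ((lam i == 0) && (lam j < 0)) || ((lam i < 0) && (lam j < 0)).

Definition qq (H : 'M[R]_n) : \bar R :=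
  ((\sum_(i < n | 0 < lam i) \sum_(j < n | lam j < 0)
      (- lam j / lam i) * ((P^T *m H *m P) i j) ^+ 2)%:E
   + delta_set (aff_crit P lam) H)%E.

Lemma cstar_ge0 i j : 0 <= cstar i j.
Proof. by rewrite /cstar; case: ifP => // /andP[h1 h2]; apply: divr_ge0; lra. Qed.

Lemma aff_Lset W : aff_crit P lam W <-> Lset P Zaff W.
Proof.
split.
- move=> [hS [h1 h2]]; split => // i j; rewrite /Zaff.
  case/orP => /andP [hi hj].
    by apply: h1 => //; apply/eqP.
  exact: h2.
- move=> [hS h]; split => //; split => i j hi hj; apply: h; rewrite /Zaff hj.
    by rewrite hi eqxx.
  by rewrite hi orbT.
Qed.

Lemma qq_hq W : symS W -> qq W = hq P cstar Zaff W.
Proof.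
move=> hW.
have e1 : \sum_(i < n | 0 < lam i) \sum_(j < n | lam j < 0)
      (- lam j / lam i) * ((P^T *m W *m P) i j) ^+ 2 = Qv P cstar W.
  rewrite /Qv [LHS]big_mkcond /=; apply: eq_bigr => i _.
  case: ifP => hi.
    rewrite [LHS]big_mkcond /=; apply: eq_bigr => j _.
    by rewrite /cstar hi /=; case: ifP => hj //; rewrite mul0r.
  by rewrite big1 // => j _; rewrite /cstar hi /= mul0r.
have e2 : delta_set (R := R) (aff_crit P lam) W = delta_set (Lset P Zaff) W.
  case: (pselect (Lset P Zaff W)) => h.
    by rewrite !delta_setT //; apply/aff_Lset.
  rewrite !delta_setF // => h'; apply: h; exact/aff_Lset.
by rewrite /qq e1 e2.
Qed.

Lemma hq_half (c : 'I_n -> 'I_n -> R) (Zs : 'I_n -> 'I_n -> bool) (W : 'M[R]_n) :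
  ((2^-1)%:E * hq P (fun i j => (2 * c i j)%R) Zs W)%E = hq P c Zs W.
Proof.
case: (pselect (Lset P Zs W)) => h.
  rewrite !hq_fin // -EFinM; congr (_%:E).
  rewrite /Qv mulr_sumr; apply: eq_bigr => i _; rewrite mulr_sumr; apply: eq_bigr => j _.
  by field.
by rewrite !hq_inf // mulr_infty gtr0_sg ?mul1e // invr_gt0.
Qed.

Definition zk k := Zm P (muk k).

Lemma fk_eq k W : symS W ->
  ((2^-1)%:E * second_subderiv (@symS R n) (@frob R n) (@delta_psd R n) (zk k) (Ym P (ln lam)) W)%E
  = hq P (cc (muk k) (ln lam)) (ZK (ln lam)) W.
Proof.
move=> hW; rewrite /zk (d2_eq P HP (muk k) (ln lam) (Hndk k) W hW) /phi.
exact: (hq_half (cc (muk k) (ln lam)) (ZK (ln lam)) W).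
Qed.

Lemma lnE j : (ln lam j < 0) = (lam j < 0).
Proof. by rewrite /ln; case: ifP => h //; rewrite ltxx. Qed.

Lemma ln_neg j : lam j < 0 -> ln lam j = lam j.
Proof. by rewrite /ln => ->. Qed.

Lemma cck_ge k i j : cstar i j <= cc (muk k) (ln lam) i j.
Proof.
case: (boolP (0 < lam i)) => hi; last by rewrite /cstar (negbTE hi) /=; exact: cc_ge0.
rewrite /cstar /cc /muk hi lnE /= hi /=.
by case: ifP => hj //; rewrite ln_neg.
Qed.

Lemma cck_beta k i j : lam i = 0 -> lam j < 0 -> cc (muk k) (ln lam) i j = - lam j * k.+1%:R.
Proof.
move=> hi hj; rewrite /cc /muk lnE hi ltxx eqxx hj ln_neg //=.
rewrite invr_gt0 ltr0n /= invrK; ring.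
Qed.

Lemma ZK_Zaff i j : ZK (ln lam) i j -> Zaff i j.
Proof. by rewrite /ZK /Zaff !lnE => /andP [-> ->]; rewrite orbT. Qed.

Lemma Lset_aff_ZK W : Lset P Zaff W -> Lset P (ZK (ln lam)) W.
Proof. by move=> [hS h]; split => // i j hij; apply: h; exact: ZK_Zaff. Qed.

Lemma Qv_cck k W : Lset P Zaff W -> Qv P (cc (muk k) (ln lam)) W = Qv P cstar W.
Proof.
move=> [hS hZ]; rewrite /Qv; apply: eq_bigr => i _; apply: eq_bigr => j _.
rewrite /cstar /cc /muk lnE.
case: (ltgtP (lam i) 0) => hi /=.
- by rewrite ltxx.
- by rewrite hi /=; case: ifP => hj //; rewrite ln_neg.
- rewrite invr_gt0 ltr0n /=; case: ifP => hj; last by [].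
  by rewrite hZ ?expr0n ?mulr0 ?mul0r // /Zaff hi eqxx hj.
Qed.

Lemma Qv_mono (c1 c2 : 'I_n -> 'I_n -> R) W : (forall i j, c1 i j <= c2 i j) -> Qv P c1 W <= Qv P c2 W.
Proof.
move=> h; rewrite /Qv; apply: ler_sum => i _; apply: ler_sum => j _.
by apply: ler_wpM2r => //; exact: sqr_ge0.
Qed.

Lemma Qv_term (c : 'I_n -> 'I_n -> R) W i j : (forall i j, 0 <= c i j) ->
  c i j * (tl P W i j) ^+ 2 <= Qv P c W.
Proof.
move=> h; rewrite /Qv.
have t0 : forall i j, 0 <= c i j * (tl P W i j) ^+ 2 by move=> i' j'; apply: mulr_ge0 => //; exact: sqr_ge0.
apply: le_trans (sum_ge1 (f := fun j => c i j * tl P W i j ^+ 2) j (t0 i)) _.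
apply: sum_ge1 => p; exact: sumr_ge0.
Qed.


Definition gk (k : nat) (w : 'M[R]_n) := hq P (cc (muk k) (ln lam)) (ZK (ln lam)) w.

Lemma epi_final : epi_conv (@symS R n) gk qq.
Proof.
move=> W hW; split.
- move=> u_ hS hu.
  rewrite /gk (qq_hq W hW).
  case: (pselect (Lset P Zaff W)) => hL.
    rewrite hq_fin //; apply: liminf_ge => M hM; rewrite lte_fin in hM.
    near=> k.
    have hk : M < Qv P cstar (u_ k).
      by near: k; exact: (cvgr_gt _ (cvg_Qv P cstar u_ W hu) _ hM).
    case: (pselect (Lset P (ZK (ln lam)) (u_ k))) => hl; last by rewrite hq_inf // leey.
    rewrite hq_fin // lee_fin; apply: le_trans (ltW hk) _.
    by apply: Qv_mono => i j; exact: cck_ge.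
  rewrite hq_inf //.
  have [i [j [hZ hw]]] : exists i j, Zaff i j /\ tl P W i j <> 0.
    apply: contrapT => hne; apply: hL; split => // i j hij.
    by apply: contrapT => hw; apply: hne; exists i, j.
  have hw2 : 0 < tl P W i j ^+ 2 by rewrite exprn_even_gt0 //; apply/eqP.
  have cv2 : (fun k => tl P (u_ k) i j ^+ 2) @ \oo --> tl P W i j ^+ 2.
    under eq_fun do rewrite expr2; rewrite expr2.
    by apply: cvgM; exact: (cvg_tl P _ _ hu).
  have hw3 : tl P W i j ^+ 2 / 2 < tl P W i j ^+ 2 by lra.
  move: hZ; rewrite /Zaff => /orP [/andP [/eqP hi hj] | /andP [hi hj]].
  + apply: liminf_ge => M _.
    pose a := - lam j * (tl P W i j ^+ 2 / 2).
    have a0 : 0 < a by apply: mulr_gt0; lra.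
    have hM1 : 0 < `|M| + 1 by have := normr_ge0 M; lra.
    have hz : 0 < a / (`|M| + 1) by apply: divr_gt0.
    near=> k.
    have h1 : tl P W i j ^+ 2 / 2 < tl P (u_ k) i j ^+ 2.
      by near: k; exact: (cvgr_gt _ cv2 _ hw3).
    have h2 : k.+1%:R^-1 < a / (`|M| + 1).
      by near: k; exact: (cvgr_lt _ (@cvg_harmonic R) _ hz).
    case: (pselect (Lset P (ZK (ln lam)) (u_ k))) => hl; last by rewrite hq_inf // leey.
    rewrite hq_fin // lee_fin.
    apply: le_trans _ (Qv_term (cc (muk k) (ln lam)) (u_ k) i j (cc_ge0 (muk k) (ln lam))).
    rewrite cck_beta //.
    have K0 : 0 < k.+1%:R :> R by rewrite ltr0n.
    rewrite ltr_pdivlMr // in h2.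
    have h3 : k.+1%:R^-1 * (`|M| + 1) * k.+1%:R < a * k.+1%:R by rewrite ltr_pM2r.
    rewrite mulrAC mulVf ?mul1r in h3; last by rewrite gt_eqF.
    have h4 : (- lam j * k.+1%:R) * (tl P W i j ^+ 2 / 2) <= (- lam j * k.+1%:R) * tl P (u_ k) i j ^+ 2.
      by apply: ler_wpM2l; [apply: mulr_ge0; lra | exact: ltW].
    have h5 := ler_norm M.
    rewrite /a in h3.
    lra.
  + apply: liminf_ge => M _.
    near=> k.
    have h1 : tl P W i j ^+ 2 / 2 < tl P (u_ k) i j ^+ 2.
      by near: k; exact: (cvgr_gt _ cv2 _ hw3).
    rewrite hq_inf ?leey // => -[_ hz].
    have := hz i j; rewrite /ZK !lnE hi hj => /(_ erefl) h0.
    by move: h1; rewrite h0 expr0n /=; lra.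
- exists (fun=> W); split => //; split; first exact: cvg_cst.
  rewrite (qq_hq W hW).
  case: (pselect (Lset P Zaff W)) => hL; last by rewrite hq_inf // leey.
  rewrite hq_fin //; apply: limsup_le => M hM; exists 0%N => // k _.
  rewrite /gk hq_fin; last exact: Lset_aff_ZK.
  by rewrite Qv_cck //; apply: ltW.
Unshelve. all: by end_near.
Qed.

End Epi.


Lemma epi_conv_ext {R : realType} {n : nat} (f g : nat -> 'M[R]_n -> \bar R) q :
  (forall k w, symS w -> f k w = g k w) -> epi_conv (@symS R n) g q -> epi_conv (@symS R n) f q.
Proof.
move=> h H w hw; have [h1 [u [hu1 [hu2 hu3]]]] := H w hw; split.
  move=> u_ hS hc; rewrite (_ : (fun k => f k (u_ k)) = (fun k => g k (u_ k))); first exact: h1.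
  by apply: funext => k; exact: h.
exists u; split => //; split => //.
by rewrite (_ : (fun k => f k (u k)) = (fun k => g k (u k))) //; apply: funext => k; exact: h.
Qed.

Lemma zk_split {R : realType} {n : nat} (P : 'M[R]_n) (lam : 'I_n -> R) k :
  zk P lam k = utl P (dg (lp lam)) + k.+1%:R^-1 *: utl P (dg (fun i => if lam i == 0 then 1 else 0)).
Proof.
rewrite /zk /Zm -utlZ -utlD; congr (utl P _); apply/matrixP => i j.
rewrite [RHS]mxE [X in _ + X]mxE !dgE /muk /lp.
case: (i == j); last by rewrite mulr0 addr0.
case: (ltgtP (lam i) 0) => h /=; rewrite ?mulr0 ?addr0 ?mulr1 ?add0r //.
Qed.

Theorem proposition3p2 (R : realType) (m n : nat)
  (f : 'rV[R]_m -> R) (G : 'rV[R]_m -> 'M[R]_n)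
  (HGsym : forall x, symS (G x))
  (Hf : C2 f) (HG : C2 G)
  (xb : 'rV[R]_m) (Hstat : stationary f G xb)
  (Yb : 'M[R]_n) (HY : multiplier f G xb Yb)
  (P : 'M[R]_n) (lam : 'I_n -> R)
  (HP : P^T *m P = 1%:M)
  (Hlam : forall i j : 'I_n, (i <= j)%N -> lam j <= lam i)
  (Hdec : G xb + Yb = P *m diag_mx (\row_i lam i) *m P^T) :
  exists q : 'M[R]_n -> \bar R,
    quad_bundle (@symS R n) (@frob R n) (@delta_psd R n) (G xb) Yb q /\
    forall H : 'M[R]_n, symS H ->
      q H = ((- 2^-1 * Upsilon (G xb) Yb H)%:E + delta_set (aff_crit P lam) H)%E /\
      ((- 2^-1 * Upsilon (G xb) Yb H)%:E + delta_set (aff_crit P lam) H)%E =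
      ((\sum_(i < n | 0 < lam i) \sum_(j < n | lam j < 0)
           (- lam j / lam i) * ((P^T *m H *m P) i j) ^+ 2)%:E
        + delta_set (aff_crit P lam) H)%E.
Proof.
have [_ [hpG [hnY hfr]]] := HY.
have [hG0 hY0] := decomp P HP lam (G xb) Yb hpG hnY hfr Hdec.
exists (qq P lam); split.
  split.
    apply: (gqf_hq P (cstar lam) (Zaff lam)); first exact: cstar_ge0.
    exact: qq_hq.
  exists (fun k => zk P lam k), (fun=> Ym P (ln lam)).
  split.
    by move=> k; split; rewrite /symS /=; exact: utl_dg_sym.
  split.
    rewrite hG0.
    have -> : (fun k => zk P lam k) = (fun k => utl P (dg (lp lam)) +
        k.+1%:R^-1 *: utl P (dg (fun i => if lam i == 0 then 1 else 0))).
      by apply: funext => k; exact: zk_split.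
    have : (fun k => utl P (dg (lp lam)) +
        k.+1%:R^-1 *: utl P (dg (fun i => if lam i == 0 then 1 else 0))) @ \oo -->
        utl P (dg (lp lam)) + 0 *: utl P (dg (fun i => if lam i == 0 then 1 else 0)).
      apply: cvgD; first exact: cvg_cst.
      apply: cvgZ; last exact: cvg_cst.
      exact: (@cvg_harmonic R).
    by rewrite scale0r addr0.
  split; first by rewrite hY0; exact: cvg_cst.
  split; first by move=> k; exact: (gtd P HP (muk lam k) (ln lam) (Hndk lam k)).
  apply: (epi_conv_ext _ (gk P lam)); last exact: epi_final.
  by move=> k w hw; exact: fk_eq.
move=> H hH.
by rewrite /qq hG0 hY0 (Ups P HP lam H hH).
Qed.
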